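(* In the setting of a cyclic three-element conjugacy class $\mathcal{C}=\{t,x,y\}$ of a finite group $G$ with the conjugation table given below, a spin connection $\{A_a\}_{a\in\mathcal{C}}$ (in the Maurer–Cartan framing) is torsion free if and only if there are functions $\alpha,\beta,\gamma\in H$ with $\alpha+\beta+\gamma=-1$ such that $$A_t=(1+\alpha)e_t+\gamma e_x+\beta e_y,\quad A_x=\gamma e_t+(1+\beta)e_x+\alpha e_y,\quad A_y=\beta e_t+\alpha e_x+(1+\gamma)e_y.$$ In particular the moduli space of torsion free connections is $2|G|$-dimensional, and every torsion free connection satisfies $A_t+A_x+A_y=0$.
   Context: Let $G$ be a finite group, $H=\mathbb{C}[G]$ the algebra of complex-valued functions on $G$, $R_g(f)(h)=f(hg)$ right translation. For a conjugacy class $\mathcal{C}\not\ni e$, $\Omega^1(H)$ is the free left $H$-module with basis $\{e_a\}_{a\in\mathcal{C}}$, $e_af=R_a(f)e_a$, $\mathrm{d}f=\sum_a(R_af-f)e_a$. $\Omega^2(H)=(\Omega^1\otimes_H\Omega^1)/\ker(\mathrm{id}-\Psi)$ with $\Psi(e_a\otimes_H e_b)=e_{aba^{-1}}\otimes_H e_a$, with product $\wedge$; the differential on 1-forms satisfies the Leibniz rule and the Maurer–Cartan equation $\mathrm{d}e_a=\theta\wedge e_a+e_a\wedge\theta$, $\theta=\sum_{a\in\mathcal{C}}e_a$. A conjugacy class with $n\ge2$ elements is cyclic if some $t\in\mathcal{C}$ has $\mathrm{Ad}_t$ acting as a cyclic permutation of $\mathcal{C}\setminus\{t\}$ and $a\mapsto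 ata^{-1}$ a permutation of $\mathcal{C}$. Here $\mathcal{C}=\{t,x,y\}$ with $\mathrm{Ad}_t:(t,x,y)\mapsto(t,y,x)$, $\mathrm{Ad}_x:(t,x,y)\mapsto(y,x,t)$, $\mathrm{Ad}_y:(t,x,y)\mapsto(x,t,y)$. In this case $\Omega^2(H)$ has relations $e_a\wedge e_a=0$, $e_x\wedge e_t+e_y\wedge e_x+e_t\wedge e_y=0$, $e_y\wedge e_t+e_x\wedge e_y+e_t\wedge e_x=0$. A spin connection is a collection $\{A_a\}_{a\in\mathcal{C}}$ of 1-forms, $A_a=\sum_b A_a^b e_b$ with $A_a^b\in H$; it is torsion free if for all $a\in\mathcal{C}$: $\mathrm{d}e_a+\sum_{b\in\mathcal{C}}A_b\wedge(e_{b^{-1}ab}-e_a)=0$. *)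

(* Defs.v *)
From HB Require Import structures.
From mathcomp Require Import all_boot all_order all_algebra all_fingroup all_field.
Set Implicit Arguments. Unset Strict Implicit. Unset Printing Implicit Defensive.
Import GRing.Theory Num.Theory.
Local Open Scope ring_scope.

(* H = C[G] = complex-valued functions on G : gT -> algC.
   An element of Omega^1 (x)_H Omega^1 is encoded by its LEFT coefficients
   w c d : gT -> algC in front of e_c (x) e_d (c, d in the class C).
   A spin connection A : gT -> gT -> gT -> algC with A a b = A_a^b. *)

(* Psi(e_a (x) e_b) = e_{a b a^-1} (x) e_a, extended left H-linearly.
   Coefficient of (Psi w) at (c,d) is w d (d^-1 c d) = w d (c ^ d). *)
Definition Psi_tensor (gT : finGroupType) (w : gT -> gT -> gT -> algC) :
  gT -> gT -> gT -> algC := fun c d => w d (c ^ d)%g.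

(* w represents 0 in Omega^2 = (Omega^1 (x)_H Omega^1)/ker(id - Psi)
   iff w lies in ker(id - Psi). *)
Definition omega2_zero (gT : finGroupType) (C : {set gT})
    (w : gT -> gT -> gT -> algC) : Prop :=
  forall c d, c \in C -> d \in C -> forall g, w c d g = Psi_tensor w c d g.

(* Tensor representative of  d e_a + sum_b A_b (x) (e_{b^-1 a b} - e_a),
   with d e_a = theta (x) e_a + e_a (x) theta (Maurer--Cartan). *)
Definition torsion_tensor (gT : finGroupType) (C : {set gT})
    (A : gT -> gT -> gT -> algC) (a : gT) : gT -> gT -> gT -> algC :=
  fun c d g =>
    ((d == a)%:R + (c == a)%:R)
    + \sum_(b in C) A b c g * ((d == (a ^ b)%g)%:R - (d == a)%:R).

Definition torsion_free (gT : finGroupType) (C : {set gT})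
    (A : gT -> gT -> gT -> algC) : Prop :=
  forall a, a \in C -> omega2_zero C (torsion_tensor C A a).

(* Main.v *)
Require Import Defs.
From HB Require Import structures.
From mathcomp Require Import all_boot all_order all_algebra all_fingroup all_field.
From mathcomp Require Import ring.
Import GRing.Theory Num.Theory.
Local Open Scope ring_scope.

Lemma lin4 {R : comPzRingType} (k1 k2 k3 k4 : R) {L M p1 q1 p2 q2 p3 q3 p4 q4 : R} :
  p1 = q1 -> p2 = q2 -> p3 = q3 -> p4 = q4 ->
  L - M = k1 * (p1 - q1) + k2 * (p2 - q2) + k3 * (p3 - q3) + k4 * (p4 - q4) ->
  L = M.
Proof.
move=> -> -> -> ->; rewrite !subrr !mulr0 !addr0 => /eqP.
by rewrite subr_eq0 => /eqP.
Qed.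

Lemma sum3 (gT : finGroupType) (t x y : gT) (F : gT -> algC) :
  t != x -> t != y -> x != y ->
  \sum_(b in [set t; x; y]) F b = F t + F x + F y.
Proof.
move=> htx hty hxy.
have -> : [set t; x; y] = t |: (x |: [set y]).
  by apply/setP => z; rewrite !inE orbA.
rewrite big_setU1 /=; last by rewrite !inE negb_or htx hty.
rewrite big_setU1 /=; last by rewrite !inE hxy.
by rewrite big_set1 addrA.
Qed.

Theorem proposition2 (gT : finGroupType) (t x y : gT)
  (htx : t != x) (hty : t != y) (hxy : x != y)
  (hclass : (t ^: [set: gT])%g = [set t; x; y])
  (Adt_x : (x ^ t^-1)%g = y) (Adt_y : (y ^ t^-1)%g = x)
  (Adx_t : (t ^ x^-1)%g = y) (Adx_y : (y ^ x^-1)%g = t)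
  (Ady_t : (t ^ y^-1)%g = x) (Ady_x : (x ^ y^-1)%g = t)
  (A : gT -> gT -> gT -> algC) :
  (torsion_free [set t; x; y] A <->
   exists alpha beta gamma : gT -> algC,
     (forall g, alpha g + beta g + gamma g = -1) /\
     (forall g,
        (A t t g = 1 + alpha g /\ A t x g = gamma g /\ A t y g = beta g) /\
        (A x t g = gamma g /\ A x x g = 1 + beta g /\ A x y g = alpha g) /\
        (A y t g = beta g /\ A y x g = alpha g /\ A y y g = 1 + gamma g)))
  /\
  (torsion_free [set t; x; y] A ->
     forall c, c \in [set t; x; y] -> forall g, A t c g + A x c g + A y c g = 0).
Proof.
have inv (u v w : gT) : (u ^ v^-1)%g = w -> (w ^ v)%g = u by move=> <-; rewrite conjgKV.
have c1 := inv _ _ _ Adt_x. have c2 := inv _ _ _ Adt_y.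
have c3 := inv _ _ _ Adx_t. have c4 := inv _ _ _ Adx_y.
have c5 := inv _ _ _ Ady_t. have c6 := inv _ _ _ Ady_x.
have c7 : (t ^ t)%g = t by rewrite conjgE mulKg.
have c8 : (x ^ x)%g = x by rewrite conjgE mulKg.
have c9 : (y ^ y)%g = y by rewrite conjgE mulKg.
have e1 : (x == t) = false by rewrite eq_sym (negbTE htx).
have e2 : (y == t) = false by rewrite eq_sym (negbTE hty).
have e3 : (y == x) = false by rewrite eq_sym (negbTE hxy).
have e4 := negbTE htx. have e5 := negbTE hty. have e6 := negbTE hxy.
have mem3 (z : gT) : z \in [set t; x; y] -> [\/ z = t, z = x | z = y].
  by rewrite !inE => /orP [/orP [/eqP->|/eqP->]|/eqP->]; [constructor 1|constructor 2|constructor 3].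
have S3 F := @sum3 gT t x y F htx hty hxy.
have fwd : torsion_free [set t; x; y] A -> forall g,
   (A y x g + A y t g + A x t g = -1) /\
   ((A t t g = 1 + A y x g /\ A t x g = A x t g /\ A t y g = A y t g) /\
    (A x t g = A x t g /\ A x x g = 1 + A y t g /\ A x y g = A y x g) /\
    (A y t g = A y t g /\ A y x g = A y x g /\ A y y g = 1 + A x t g)).
  move=> H g.
  have mt : t \in [set t; x; y] by rewrite !inE eqxx.
  have mx : x \in [set t; x; y] by rewrite !inE eqxx !orbT.
  have my : y \in [set t; x; y] by rewrite !inE eqxx !orbT.
  have E1 := H t mt t x mt mx g.
  have E3 := H t mt x t mx mt g.
  have E4 := H t mt t y mt my g.
  have E6 := H x mx x y mx my g.
  have E7 := H x mx x t mx mt g.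
  have E10 := H y my x y mx my g.
  have E12 := H y my t y mt my g.
  move: E1 E3 E4 E6 E7 E10 E12; rewrite /Psi_tensor /torsion_tensor !S3
    ?c1 ?c2 ?c3 ?c4 ?c5 ?c6 ?c7 ?c8 ?c9 ?eqxx ?e1 ?e2 ?e3 ?e4 ?e5 ?e6 /=.
  move=> E1 E3 E4 E6 E7 E10 E12.
  have ES : A y x g + A y t g + A x t g = -1.
    by apply: (lin4 (1) (-1) (0) (0) E1 E3 E3 E3); ring.
  split; first exact: ES.
  split; [|split]; (split; [|split]) => //.
  - by apply: (lin4 (-1) (0) (0) (0) E7 E7 E7 E7); ring.
  - by apply: (lin4 (1) (-1) (0) (0) E6 E4 E4 E4); ring.
  - by apply: (lin4 (-1) (1) (-1) (1) E12 E7 E1 E3); ring.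
  - by apply: (lin4 (-1) (0) (0) (0) E1 E1 E1 E1); ring.
  - by apply: (lin4 (-1) (-1) (1) (1) E10 E6 E4 E3); ring.
  - by apply: (lin4 (-1) (0) (0) (0) E4 E4 E4 E4); ring.
split.
  split.
    move=> H; exists (fun g => A y x g), (fun g => A y t g), (fun g => A x t g).
    by split=> g; have [] := fwd H g.
  case=> al [be [ga [hs hA]]] a ha c d hc hd g.
  have hga : ga g = -1 - al g - be g.
    by apply: (lin4 (1) (0) (0) (0) (hs g) (hs g) (hs g) (hs g)); ring.
  have [[Ttt [Ttx Tty]] [[Txt [Txx Txy]] [Tyt [Tyx Tyy]]]] := hA g.
  move: ha hc hd.
  by move=> /mem3 [->|->|->] /mem3 [->|->|->] /mem3 [->|->|->];
  rewrite /Psi_tensor /torsion_tensor !S3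
    ?c1 ?c2 ?c3 ?c4 ?c5 ?c6 ?c7 ?c8 ?c9 ?eqxx ?e1 ?e2 ?e3 ?e4 ?e5 ?e6 /=
    ?Ttt ?Ttx ?Tty ?Txt ?Txx ?Txy ?Tyt ?Tyx ?Tyy ?hga; ring.
move=> H c /mem3 [->|->|->] g;
  have [ES [[T1 [T2 T3]] [[_ [T5 T6]] [_ [_ T9]]]]] := fwd H g;
  rewrite ?T1 ?T2 ?T3 ?T5 ?T6 ?T9;
  by apply: (lin4 (1) (0) (0) (0) ES ES ES ES); ring.
Qed.
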